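(* If $\sigma$ is a nonempty right closed subset of $\mathbb{R}$, then there exists a sequence $\{r_n\}_{n\ge1}$ whose right closure is $\sigma$.
   Context: A nonempty set $X\subseteq\mathbb{R}$ is right closed if $\sup Y\in X$ for every nonempty bounded $Y\subseteq X$. For nonempty $K\subseteq\mathbb{R}$, its right closure is $\lceil K\rceil=\{\sup\sigma':\emptyset\neq\sigma'\subseteq K,\ \sigma'\text{ bounded}\}$, the smallest right closed set containing $K$. *)

(* Defs.v *)
From Stdlib Require Import Reals.
Open Scope R_scope.

Definition nonempty (X : R -> Prop) : Prop := exists x, X x.

Definition bounded (X : R -> Prop) : Prop :=
  (exists M, forall x, X x -> x <= M) /\ (exists m, forall x, X x -> m <= x).

Definition subset (Y X : R -> Prop) : Prop := forall x, Y x -> X x.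

Definition right_closed (X : R -> Prop) : Prop :=
  nonempty X /\
  forall Y : R -> Prop, subset Y X -> nonempty Y -> bounded Y ->
    forall s, is_lub Y s -> X s.

Definition right_closure (K : R -> Prop) : R -> Prop :=
  fun x => exists Y : R -> Prop,
    subset Y K /\ nonempty Y /\ bounded Y /\ is_lub Y x.

(* Main.v *)
Require Import Defs.
From Stdlib Require Import Reals.
From Stdlib Require Import Lra Lia ZArith Classical ClassicalEpsilon Cantor.
Open Scope R_scope.

Lemma pick_ex (P : R -> Prop) (d : R) :
  exists x, P x \/ (~ (exists y, P y) /\ x = d).
Proof.
  destruct (classic (exists y, P y)) as [[y Hy]|H].
  - exists y; now left.
  - exists d; now right.
Qed.

Definition pick (P : R -> Prop) (d : R) : R :=
  proj1_sig (constructive_indefinite_description _ (pick_ex P d)).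

Lemma pick_spec P d : P (pick P d) \/ pick P d = d.
Proof.
  unfold pick; destruct (proj2_sig (constructive_indefinite_description _ (pick_ex P d))) as [H|[_ H]]; auto.
Qed.

Lemma pick_good P d : (exists y, P y) -> P (pick P d).
Proof.
  intros H; unfold pick; destruct (proj2_sig (constructive_indefinite_description _ (pick_ex P d))) as [H'|[H' _]]; tauto.
Qed.

Definition dq (a b c : nat) : R := (INR a - INR b) / INR c.

Definition tt (m : nat) : R :=
  let (a, bc) := of_nat m in let (b, c) := of_nat bc in dq a b c.

Lemma Z_to_nat_neg z : (z <= 0)%Z -> Z.to_nat z = 0%nat.
Proof. destruct z; simpl; auto; lia. Qed.

Lemma IZR_nat z : IZR z = INR (Z.to_nat z) - INR (Z.to_nat (- z)).
Proof.
  destruct (Z.le_ge_cases 0 z) as [H|H].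
  - rewrite (Z_to_nat_neg (-z)) by lia. rewrite (INR_IZR_INZ (Z.to_nat z)), Z2Nat.id by lia. simpl; lra.
  - rewrite (Z_to_nat_neg z) by lia. rewrite (INR_IZR_INZ (Z.to_nat (- z))), Z2Nat.id by lia.
    rewrite opp_IZR; simpl; lra.
Qed.

Lemma dense a b : a < b -> exists m, a < tt m < b.
Proof.
  intros Hab.
  destruct (archimed_cor1 (b - a)) as [N [HN HN0]]; [lra|].
  assert (HNp : 0 < INR N) by (apply lt_0_INR; lia).
  destruct (archimed (a * INR N)) as [H1 H2].
  set (z := up (a * INR N)) in *.
  exists (to_nat (Z.to_nat z, to_nat (Z.to_nat (- z), N))).
  unfold tt. rewrite !cancel_of_to. unfold dq. rewrite <- IZR_nat.
  split.
  - apply Rmult_lt_reg_r with (INR N); auto.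
    unfold Rdiv; rewrite Rmult_assoc, Rinv_l by lra. lra.
  - apply Rmult_lt_reg_r with (INR N); auto.
    unfold Rdiv; rewrite Rmult_assoc, Rinv_l by lra.
    assert (/ INR N * INR N < (b - a) * INR N) by (apply Rmult_lt_compat_r; lra).
    rewrite Rinv_l in H by lra. lra.
Qed.

Section S.
Variable sigma : R -> Prop.
Variable s0 : R.

Definition Bmin (p : R) : R :=
  pick (fun m => sigma m /\ p <= m /\ forall z, sigma z -> p <= z -> m <= z) s0.
Definition Aany (p q : R) : R :=
  pick (fun m => sigma m /\ p <= m /\ m <= q) s0.

Definition rr (n : nat) : R :=
  let (u, w) := of_nat n in let (v, k) := of_nat w in
  match k with 0%nat => Bmin (tt u) | S _ => Aany (tt u) (tt v) end.

Hypothesis Hs0 : sigma s0.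

Lemma rr_in n : sigma (rr n).
Proof.
  unfold rr. destruct (of_nat n) as [u w]. destruct (of_nat w) as [v k].
  destruct k.
  - unfold Bmin; destruct (pick_spec (fun m => sigma m /\ tt u <= m /\ forall z, sigma z -> tt u <= z -> m <= z) s0) as [H|H]; [tauto|rewrite H; auto].
  - unfold Aany; destruct (pick_spec (fun m => sigma m /\ tt u <= m /\ m <= tt v) s0) as [H|H]; [tauto|rewrite H; auto].
Qed.

Lemma approx x eps : sigma x -> 0 < eps -> exists n, x - eps < rr n <= x.
Proof.
  intros Hx He.
  destruct (dense (x - eps) x) as [u Hu]; [lra|].
  destruct (classic (exists y, sigma y /\ tt u <= y < x)) as [[y Hy]|Hn].
  - destruct (dense y x) as [v Hv]; [lra|].
    exists (to_nat (u, to_nat (v, 1%nat))).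
    unfold rr; rewrite !cancel_of_to.
    destruct (pick_good (fun m => sigma m /\ tt u <= m /\ m <= tt v) s0) as [_ [H1 H2]].
    + exists y; repeat split; tauto || lra.
    + unfold Aany; lra.
  - exists (to_nat (u, to_nat (0%nat, 0%nat))).
    unfold rr; rewrite !cancel_of_to.
    destruct (pick_good (fun m => sigma m /\ tt u <= m /\ forall z, sigma z -> tt u <= z -> m <= z) s0) as [_ [H1 H2]].
    + exists x; repeat split; auto; try lra.
      intros z Hz Hz'. destruct (Rle_or_lt x z); auto.
      exfalso; apply Hn; exists z; split; auto; lra.
    + unfold Bmin. split; [lra|]. apply H2; auto; lra.
Qed.
End S.

Theorem lemma3p7 (sigma : R -> Prop) :
  nonempty sigma -> right_closed sigma ->
  exists r : nat -> R,
    forall x, right_closure (fun y => exists n : nat, r n = y) x <-> sigma x.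
Proof.
  intros [s0 Hs0] [_ Hrc].
  exists (rr sigma s0). intros x; split.
  - intros [Y [HY1 [HY2 [HY3 HY4]]]].
    apply (Hrc Y); auto.
    intros z Hz. destruct (HY1 z Hz) as [n Hn]. subst. apply rr_in; auto.
  - intros Hx.
    exists (fun y => (exists n, rr sigma s0 n = y) /\ x - 1 < y <= x).
    split; [intros z [H _]; auto|].
    split.
    { destruct (approx sigma s0 x 1 Hx) as [n Hn]; [lra|]. exists (rr sigma s0 n); split; eauto. }
    split.
    { split; [exists x | exists (x - 1)]; intros z [_ Hz]; lra. }
    split.
    + intros z [_ Hz]; lra.
    + intros b Hb. destruct (Rle_or_lt x b) as [|Hlt]; auto.
      destruct (approx sigma s0 x (Rmin 1 (x - b)) Hx) as [n Hn].
      { apply Rmin_glb_lt; lra. }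
      assert (Hm1 := Rmin_l 1 (x - b)). assert (Hm2 := Rmin_r 1 (x - b)).
      assert (rr sigma s0 n <= b) by (apply Hb; split; [eauto|lra]).
      lra.
Qed.
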